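(* Let $G$ be a finite abelian group. If $B\subset G$ is an irreducible balanced set, then $|B|\geqslant\log_2(\mathrm{minspan}(B))+1$.
   Context: A set $B\subset G$ is balanced if for every $b\in B$ there exist distinct $b_1,b_2\in B$ with $2b=b_1+b_2$. A balanced set $B$ is irreducible if it does not contain two disjoint balanced subsets. For $C\subset G$, $\mathrm{minspan}(C)=\min_{g\in G}|\langle C+g\rangle|$, where $\langle X\rangle$ is the subgroup generated by $X$. *)

(* Defs.v *)
From mathcomp Require Import all_boot all_fingroup.
From Stdlib Require Import Reals.
Set Implicit Arguments. Unset Strict Implicit. Unset Printing Implicit Defensive.
Import GroupScope.

(* The finite abelian group G is the whole finGroupType gT (with abelian
   [set: gT]); the group law is written multiplicatively, so "2b" is b ^+ 2
   and "b1 + b2" is b1 * b2. *)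

Definition balanced (gT : finGroupType) (B : {set gT}) : Prop :=
  B != set0 /\
  forall b, b \in B -> exists b1 b2, [/\ b1 \in B, b2 \in B, b1 != b2 & b ^+ 2 = b1 * b2].

Definition irreducible_balanced (gT : finGroupType) (B : {set gT}) : Prop :=
  balanced B /\
  ~ (exists B1 B2 : {set gT}, [/\ B1 \subset B, B2 \subset B, [disjoint B1 & B2],
                               balanced B1 & balanced B2]).

Definition minspan (gT : finGroupType) (C : {set gT}) : nat :=
  \big[minn/#|gT|]_(g : gT) #|<< C :* g >>|.

(* Main.v *)
Require Import Defs.
From mathcomp Require Import all_boot all_fingroup.
From mathcomp Require Import zify.
Import GroupScope.
Set Implicit Arguments. Unset Strict Implicit. Unset Printing Implicit Defensive.
Definition upd (T : eqType) (c : T -> nat) (x : T) (n : nat) :=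
  fun z => if z == x then n else c z.

Definition valS (gT : finGroupType) (y : gT -> gT) (c : gT -> nat) (s : seq gT) :=
  foldr (fun b acc => y b ^+ c b * acc) 1 s.

Lemma valS_eq (gT : finGroupType) (y : gT -> gT) (c1 c2 : gT -> nat) s :
  (forall b, b \in s -> y b ^+ c1 b = y b ^+ c2 b) -> valS y c1 s = valS y c2 s.
Proof.
elim: s => [//|a s IH] H /=.
rewrite H ?mem_head // IH // => b bs; apply: H; by rewrite in_cons bs orbT.
Qed.

Lemma valS_upd0 (gT : finGroupType) (y : gT -> gT) (c : gT -> nat) s x :
  (forall a b : gT, a * b = b * a) ->
  uniq s -> x \in s -> valS y c s = valS y (upd c x 0) s * y x ^+ c x.
Proof.
move=> comm; elim: s => [//|a s IH] /= /andP[nas us]; rewrite in_cons.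
case: eqP => [exa _ | ne xs].
  subst a.
  rewrite /upd eqxx expg0 mul1g.
  rewrite (@valS_eq _ _ (fun z => if z == x then 0 else c z) c); last first.
    by move=> b bs; case: eqP => // eba; move: nas; by rewrite -eba bs.
  by rewrite comm.
rewrite (IH us xs) mulgA; congr (_ * _ * _).
by rewrite /upd; case: eqP => // e; case: ne.
Qed.

Lemma valS_add (gT : finGroupType) (y : gT -> gT) (c1 c2 : gT -> nat) s :
  (forall a b : gT, a * b = b * a) ->
  valS y (fun z => c1 z + c2 z) s = valS y c1 s * valS y c2 s.
Proof.
move=> comm; elim: s => [|a s IH] /=; first by rewrite mulg1.
rewrite IH expgD -!mulgA; congr (_ * _).
by rewrite !mulgA [y a ^+ c2 a * _]comm.
Qed.

Lemma valS_upd (gT : finGroupType) (y : gT -> gT) (c : gT -> nat) s x n :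
  (forall a b : gT, a * b = b * a) ->
  uniq s -> x \in s -> valS y (upd c x n) s = valS y (upd c x 0) s * y x ^+ n.
Proof.
move=> comm us xs; rewrite (valS_upd0 _ (upd c x n) comm us xs).
rewrite {3}/upd eqxx; congr (_ * _); apply: valS_eq => b _.
by rewrite /upd; case: eqP.
Qed.

Lemma sum_upd (T : finType) (B : {set T}) (c v : T -> nat) x n : x \in B ->
  \sum_(z in B) upd c x n z * v z + c x * v x = \sum_(z in B) c z * v z + n * v x.
Proof.
move=> xB; rewrite (bigD1 x xB) [in RHS](bigD1 x xB) /= /upd eqxx.
have -> : \sum_(i in B | i != x) (if i == x then n else c i) * v i =
          \sum_(i in B | i != x) c i * v i.
  by apply: eq_bigr => i /andP[_ /negbTE ->].
by rewrite addnC [n * v x + _]addnC addnA.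
Qed.

Lemma valS0 (gT : finGroupType) (y : gT -> gT) s : valS y (fun _ => 0) s = 1.
Proof. by elim: s => [//|a s IH] /=; rewrite IH expg0 mulg1. Qed.

Lemma bigmin_le (I : eqType) (r : seq I) (F : I -> nat) m i :
  i \in r -> \big[minn/m]_(j <- r) F j <= F i.
Proof.
elim: r => [//|a r IH]; rewrite in_cons big_cons => /orP[/eqP <-|ir].
  exact: geq_minl.
by apply: leq_trans (geq_minr _ _) (IH ir).
Qed.

Lemma main_bound (gT : finGroupType) (B : {set gT}) :
  abelian [set: gT] -> irreducible_balanced B -> minspan B <= expn 2 #|B|.-1.
Proof.
move=> ab [[Bn0 Bbal] irr].
have comm : forall a b : gT, a * b = b * a.
  by move=> a b; exact: ((centsP ab) a (in_setT a) b (in_setT b)).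
pose P (b : gT) (p : gT * gT) :=
  [&& p.1 \in B, p.2 \in B, p.1 != p.2 & b ^+ 2 == p.1 * p.2].
pose f b := odflt (b, b) [pick p | P b p].
pose f1 b := (f b).1.
pose f2 b := (f b).2.
have fP : forall b, b \in B -> [&& f1 b \in B, f2 b \in B, f1 b != f2 b & b ^+ 2 == f1 b * f2 b].
  move=> b bB; rewrite /f1 /f2 /f; case: (pickP (P b)) => [p //|].
  move=> none; have [b1 [b2 [h1 h2 h3 h4]]] := Bbal b bB.
  move/eqP: h4 => h4; by have := none (b1, b2); rewrite /P /= h1 h2 h3 h4.
have f1B : forall b, b \in B -> f1 b \in B by move=> b /fP /and4P[].
have f2B : forall b, b \in B -> f2 b \in B by move=> b /fP /and4P[].
pose good (S : {set gT}) :=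
  [&& S != set0, S \subset B & [forall b in S, (f1 b \in S) && (f2 b \in S)]].
have good_bal : forall S, good S -> balanced S.
  move=> S /and3P[Sn0 SB /forall_inP cl]; split => // b bS.
  have /fP /and4P[_ _ ne /eqP e] := subsetP SB b bS.
  have /andP[i1 i2] := cl b bS.
  by exists (f1 b), (f2 b); split.
have good_meet : forall S T, good S -> good T -> S :&: T != set0.
  move=> S T gS gT'; rewrite setI_eq0; apply/negP => dj; apply: irr.
  exists S, T; split => //; [by case/and3P: gS | by case/and3P: gT' | by apply: good_bal | by apply: good_bal].
have goodB : good B.
  by rewrite /good Bn0 subxx /=; apply/forall_inP => b bB; rewrite f1B ?f2B.
have exn : exists n, [exists S : {set gT}, good S && (#|S| == n)].
  by exists #|B|; apply/existsP; exists B; rewrite goodB eqxx.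
have [x0 x0B x0good] : exists2 x0, x0 \in B & forall T, good T -> x0 \in T.
  case: (ex_minnP exn) => n0 /existsP[S0 /andP[gS0 /eqP cS0]] minS.
  have sub0 : forall T, good T -> S0 \subset T.
    move=> T gT'.
    have gI : good (S0 :&: T).
      rewrite /good good_meet //=.
      case/and3P: gS0 => _ S0B /forall_inP cl0.
      case/and3P: gT' => _ TB /forall_inP clT.
      apply/andP; split; first by apply: subset_trans (subsetIl _ _) S0B.
      apply/forall_inP => b; rewrite inE => /andP[bS bT].
      rewrite !inE; by case/andP: (cl0 b bS) => -> ->; case/andP: (clT b bT) => -> ->.
    have : n0 <= #|S0 :&: T|.
      by apply: minS; apply/existsP; exists (S0 :&: T); rewrite gI eqxx.
    rewrite -cS0 => le; apply/setIidPl/eqP.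
    by rewrite eqEcard subsetIl le.
  case/and3P: (gS0) => /set0Pn[x0 x0S] S0B _.
  exists x0; first exact: subsetP S0B x0 x0S.
  by move=> T gT'; apply: subsetP (sub0 T gT') x0 x0S.
pose step (S : {set gT}) := S :|: [set b in B | (f1 b \in S) || (f2 b \in S)].
pose L t := iter t step [set x0].
have LS : forall t, L t.+1 = step (L t) by [].
have LB : forall t, L t \subset B.
  elim=> [|t IH]; first by rewrite /L /= sub1set.
  by rewrite LS /step subUset IH /=; apply/subsetP => z; rewrite inE => /andP[].
have Lmono1 : forall t, L t \subset L t.+1 by move=> t; rewrite LS /step subsetUl.
have Lmono : forall s t, s <= t -> L s \subset L t.
  move=> s t; elim: t => [|t IH]; first by rewrite leqn0 => /eqP ->.
  rewrite leq_eqVlt => /orP[/eqP -> //| lt].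
  by apply: subset_trans (IH lt) (Lmono1 t).
have x0L : forall t, x0 \in L t.
  by move=> t; apply: subsetP (Lmono 0 t (leq0n t)) _ _; rewrite /L /= set11.
have key : forall t, (B \subset L t) || (t < #|L t|).
  elim=> [|t IH]; first by rewrite /L /= cards1 orbT.
  case BL1: (B \subset L t.+1) => //=.
  have nBL : ~~ (B \subset L t).
    by apply/negP => h; rewrite (subset_trans h (Lmono1 t)) in BL1.
  rewrite (negbTE nBL) /= in IH.
  have neq : L t != L t.+1.
    apply/eqP => e.
    have gC : good (B :\: L t).
      rewrite /good setD_eq0 nBL subsetDl /=.
      apply/forall_inP => b; rewrite inE => /andP[nbL bB].
      rewrite !inE f1B // f2B // !andbT.
      apply/andP; split; apply/negP => h; move/negP: nbL; apply;
        rewrite e LS /step !inE bB h ?orbT //.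
    by have := x0good _ gC; rewrite inE x0L.
  have : L t \proper L t.+1 by rewrite properEneq neq Lmono1.
  by move/proper_card => h; apply: leq_trans h; rewrite ltnS.
have BLN : B \subset L #|B|.
  have := key #|B|; case/orP => // lt.
  have := subset_leq_card (LB #|B|); lia.
set N := #|B| in BLN.
have exd : forall b, exists t, (b \in L t) || (t == N).
  by move=> b; exists N; rewrite eqxx orbT.
pose d b := ex_minn (exd b).
have dle : forall b, d b <= N.
  by move=> b; rewrite /d; case: (ex_minnP (exd b)) => m _ /(_ N); rewrite eqxx orbT => ->.
have dmem : forall b, b \in B -> b \in L (d b).
  move=> b bB; rewrite /d; case: (ex_minnP (exd b)) => m /orP[//|/eqP ->] _.
  exact: subsetP BLN b bB.
have dmin : forall b t, b \in L t -> d b <= t.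
  by move=> b t h; rewrite /d; case: (ex_minnP (exd b)) => m _ /(_ t); rewrite h => ->.
have dsucc : forall b, b \in B -> b != x0 ->
    0 < d b /\ ((d (f1 b) < d b) || (d (f2 b) < d b)).
  move=> b bB bx0; have := dmem b bB.
  case E: (d b) => [|s].
    by rewrite /L /= inE (negbTE bx0).
  rewrite LS /step !inE => /orP[bL|/andP[_ /orP[h|h]]].
  - by have := dmin b s bL; rewrite E ltnn.
  - by split => //; rewrite ltnS (dmin _ _ h).
  - by split => //; rewrite !ltnS (dmin _ _ h) orbT.
pose v b := expn 2 (N - d b).
have v_gt0 : forall b, 0 < v b by move=> b; rewrite /v expn_gt0.
have v_le : forall b, v b <= expn 2 N by move=> b; rewrite /v leq_pexp2l // leq_subr.
have v_fire : forall b, b \in B -> b != x0 -> (v b).*2 < v (f1 b) + v (f2 b).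
  move=> b bB bx0; have [dpos /orP[h|h]] := dsucc b bB bx0.
  - have : (v b).*2 <= v (f1 b).
      rewrite /v -mul2n -expnS leq_pexp2l //; have := dle b; lia.
    have := v_gt0 (f2 b); lia.
  - have : (v b).*2 <= v (f2 b).
      rewrite /v -mul2n -expnS leq_pexp2l //; have := dle b; lia.
    have := v_gt0 (f1 b); lia.
pose y (z : gT) := z * x0^-1.
pose val c := valS y c (enum B).
pose Tot (c : gT -> nat) := \sum_(z in B) c z * 1.
pose Psi (c : gT -> nat) := \sum_(z in B) c z * v z.
have uB : uniq (enum B) := enum_uniq _.
have valU : forall c x n, x \in B -> val (upd c x n) = val (upd c x 0) * y x ^+ n.
  by move=> c x n xB; apply: valS_upd => //; rewrite mem_enum.
have valU0 : forall c x, x \in B -> val c = val (upd c x 0) * y x ^+ c x.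
  by move=> c x xB; apply: valS_upd0 => //; rewrite mem_enum.
have valInc : forall c x, x \in B -> val (upd c x (c x + 1)) = val c * y x.
  by move=> c x xB; rewrite valU // addn1 expgSr mulgA -valU0.
have yrel : forall b, b \in B -> y (f1 b) * y (f2 b) = y b ^+ 2.
  move=> b bB; have /and4P[_ _ _ /eqP e] := fP b bB.
  rewrite /y expgMn; last exact: comm.
  rewrite e !expgS expg0 !mulg1 !mulgA; congr (_ * _).
  by rewrite -!mulgA [x0^-1 * f2 b]comm.
have PsiB : forall c, Psi c <= Tot c * expn 2 N.
  move=> c; rewrite /Psi /Tot big_distrl /=; apply: leq_sum => z _.
  by rewrite muln1 leq_mul2l v_le orbT.
have stab : forall m c, Tot c * expn 2 N - Psi c < m ->
    exists c', val c' = val c /\ forall b, b \in B -> b != x0 -> c' b <= 1.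
  elim=> [//|m IH] c hm.
  case: (pickP (fun b => [&& b \in B, b != x0 & 1 < c b])) => [b /and3P[bB bx0 cb]|none]; last first.
    exists c; split => // b bB bx0; have := none b; rewrite /= bB bx0 /=.
    by move/negbT; rewrite -leqNgt.
  have jB := f1B b bB; have kB := f2B b bB.
  set j := f1 b in jB *; set k := f2 b in kB *.
  pose c1 := upd c b (c b - 2); pose c2 := upd c1 j (c1 j + 1); pose c3 := upd c2 k (c2 k + 1).
  have e3 : val c3 = val c.
    rewrite /c3 valInc // /c2 valInc // /c1 valU // -(mulgA _ (y j) (y k)) yrel // -mulgA.
    by rewrite -expgD subnK // (valU0 c b bB).
  have t1 : Tot c1 + c b * 1 = Tot c + (c b - 2) * 1 := @sum_upd _ B c (fun _ => 1%N) b _ bB.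
  have t2 : Tot c2 + c1 j * 1 = Tot c1 + (c1 j + 1) * 1 := @sum_upd _ B c1 (fun _ => 1%N) j _ jB.
  have t3 : Tot c3 + c2 k * 1 = Tot c2 + (c2 k + 1) * 1 := @sum_upd _ B c2 (fun _ => 1%N) k _ kB.
  have p1 : Psi c1 + c b * v b = Psi c + (c b - 2) * v b := @sum_upd _ B c v b _ bB.
  have p2 : Psi c2 + c1 j * v j = Psi c1 + (c1 j + 1) * v j := @sum_upd _ B c1 v j _ jB.
  have p3 : Psi c3 + c2 k * v k = Psi c2 + (c2 k + 1) * v k := @sum_upd _ B c2 v k _ kB.
  have vf := v_fire b bB bx0.
  have hX : 2 * v b <= c b * v b by rewrite leq_mul2r cb orbT.
  rewrite !muln1 mulnBl !mulnDl !mul1n in t1 t2 t3 p1 p2 p3.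
  have T3 : Tot c3 = Tot c by lia.
  have P3 : Psi c < Psi c3 by rewrite -/j -/k in vf; lia.
  have := PsiB c3; rewrite T3 => hb.
  have [c' [ec' st]] := IH c3 (ltac:(lia)).
  by exists c'; rewrite ec' e3.
pose Sset := [set val (fun z => (z \in T) : nat) | T : {set gT} in powerset (B :\ x0)].
have inS : forall c, val c \in Sset.
  move=> c; have [c' [ec' st]] := stab (Tot c * expn 2 N - Psi c).+1 c (ltnSn _).
  rewrite -ec'; apply/imsetP; exists [set z in B :\ x0 | c' z == 1%N].
    by rewrite powersetE; apply/subsetP => z; rewrite inE => /andP[].
  apply: valS_eq => b; rewrite mem_enum => bB.
  rewrite inE in_setD1 bB andbT.
  case: (eqVneq b x0) => [-> | bx0] /=.
    by rewrite /y mulgV !expg1n.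
  by have := st b bB bx0; case: (c' b) => [|[|n]].
have gS : group_set Sset.
  apply/group_setP; split.
    by have := inS (fun _ => 0%N); rewrite /val valS0.
  move=> a b /imsetP[T _ ->] /imsetP[U _ ->].
  by rewrite /val -(valS_add _ _ _ _ comm); apply: inS.
pose G := Group gS.
have AsubG : B :* x0^-1 \subset G.
  apply/subsetP => z; rewrite mem_rcoset invgK => zB.
  have -> : z = y (z * x0) by rewrite /y mulgK.
  have := inS (upd (fun _ => 0%N) (z * x0) 1).
  rewrite /val valS_upd // ?mem_enum //.
  rewrite (@valS_eq _ _ _ (fun _ => 0%N)) ?valS0 ?mul1g ?expg1 //.
  by move=> b _; rewrite /upd; case: eqP.
have h1 : minspan B <= #|<<B :* x0^-1>>|.
  by rewrite /minspan; apply: bigmin_le; rewrite mem_index_enum.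
have h2 : #|<<B :* x0^-1>>| <= #|G| by apply: subset_leq_card; rewrite gen_subG.
have h3 : #|G| <= expn 2 N.-1.
  apply: leq_trans (leq_imset_card _ _) _.
  rewrite card_powerset /N (cardsD1 x0 B) x0B.
  by [].
by apply: leq_trans h1 (leq_trans h2 h3).
Qed.

Lemma minspan_gt0 (gT : finGroupType) (B : {set gT}) : 0 < minspan B.
Proof.
rewrite /minspan; apply: (big_ind (fun k => 0 < k)).
- by apply/card_gt0P; exists 1.
- by move=> a b a0 b0; rewrite leq_min a0 b0.
- by move=> g _; exact: cardG_gt0.
Qed.

From Stdlib Require Import Reals.
From Stdlib Require Import Lra.
Lemma INR_expn2 k : INR (expn 2 k) = (2 ^ k)%R.
Proof. elim: k => [//|k IH]; rewrite expnS mult_INR IH /=; lra. Qed.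

Lemma real_part (m n : nat) : (0 < m)%N -> (m <= expn 2 n.-1)%N -> (0 < n)%N ->
  (ln (INR m) / ln 2 + 1 <= INR n)%R.
Proof.
move=> m0 mle n0.
have l2 : (0 < ln 2)%R by rewrite -ln_1; apply: ln_increasing; lra.
have hm : (0 < INR m)%R by apply: lt_0_INR; apply/ltP.
have hle : (INR m <= 2 ^ n.-1)%R.
  have -> : (2 ^ n.-1 = INR (expn 2 n.-1))%R by rewrite INR_expn2.
  exact: (le_INR _ _ (ssrnat.leP mle)).
have hl : (ln (INR m) <= INR n.-1 * ln 2)%R.
  rewrite -ln_pow; last lra.
  case: (Rle_lt_or_eq_dec _ _ hle) => h.
    by apply: Rlt_le; apply: ln_increasing.
  by rewrite h; lra.
have hn : INR n = (INR n.-1 + 1)%R by rewrite -S_INR prednK.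
rewrite hn.
apply: Rplus_le_compat_r.
apply (Rmult_le_reg_r (ln 2)) => //.
rewrite /Rdiv Rmult_assoc Rinv_l; lra.
Qed.

Theorem corollary4p7 (gT : finGroupType) (B : {set gT}) :
  abelian [set: gT] -> irreducible_balanced B ->
  (ln (INR (minspan B)) / ln 2 + 1 <= INR #|B|)%R.
Proof.
move=> ab ib; apply: real_part.
- exact: minspan_gt0.
- exact: main_bound.
- case: ib => [[Bn0 _] _]; by rewrite card_gt0.
Qed.
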